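(* Let $\mathcal H$ be the $5$-uniform hypergraph defined below, let $e,f$ be two edges of $\mathcal H$, and let $\phi : V(\mathcal{H}_{ef}) \to V(\mathcal{H})$ be a monomorphism. If $r, g \in \mathcal{H}_{ef}$, $\phi(r) = r$ and $\phi(g) = g$, then $\phi$ is the identity.
   Context: $\mathcal{H}$ has vertex set $\{z, v_1,\dots,v_9\}$ and edges $r=\{z,v_1,v_3,v_5,v_8\}$, $g=\{z,v_2,v_4,v_7,v_9\}$, $a=\{v_1,v_4,v_6,v_8,v_9\}$, $b=\{v_9,v_1,v_2,v_3,v_4\}$, and $e_i=\{v_i,v_{i+1},v_{i+2},v_{i+3},v_{i+4}\}$ for $i=1,\dots,5$. $\mathcal{H}_{ef}$ is the hypergraph with edge set $E(\mathcal H)\setminus\{e,f\}$, and $V(\mathcal H_{ef})$ is the union of its edges. A monomorphism $\phi: V(\mathcal{H}_{ef})\to V(\mathcal{H})$ is an injective map such that $\phi(x):=\{\phi(y): y\in x\}$ is an edge of $\mathcal H$ for every edge $x$ of $\mathcal H_{ef}$; ''identity'' means $\phi(y)=y$ for all $y\in V(\mathcal H_{ef})$. *)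

(* Defs.v *)
From mathcomp Require Import all_boot.
Set Implicit Arguments. Unset Strict Implicit. Unset Printing Implicit Defensive.

Definition vtx := 'I_10.
Definition z : vtx := inord 0.
Definition v (i : nat) : vtx := inord i.

Definition r_edge : {set vtx} := [set z; v 1; v 3; v 5; v 8].
Definition g_edge : {set vtx} := [set z; v 2; v 4; v 7; v 9].
Definition a_edge : {set vtx} := [set v 1; v 4; v 6; v 8; v 9].
Definition b_edge : {set vtx} := [set v 9; v 1; v 2; v 3; v 4].
Definition e_edge (i : nat) : {set vtx} :=
  [set v i; v i.+1; v i.+2; v i.+3; v i.+4].

Definition H : {set {set vtx}} :=
  [set r_edge; g_edge; a_edge; b_edge;
       e_edge 1; e_edge 2; e_edge 3; e_edge 4; e_edge 5].

Definition H_ef (e f : {set vtx}) : {set {set vtx}} := H :\ e :\ f.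

Definition V_ef (e f : {set vtx}) : {set vtx} := cover (H_ef e f).

(* phi : V(H_ef) -> V(H) is a monomorphism; phi is given as a total function
   on vtx of which only the restriction to V(H_ef) matters. *)
Definition monomorphism (e f : {set vtx}) (phi : vtx -> vtx) : Prop :=
  {in V_ef e f &, injective phi} /\
  forall x, x \in H_ef e f -> phi @: x \in H.

(* Main.v *)
Require Import Defs.
From mathcomp Require Import all_boot.

Definition setn (l : seq nat) : {set vtx} := [set x : vtx | val x \in l].

Definition Rz : seq nat := [:: 0; 1; 3; 5; 8].
Definition Gz : seq nat := [:: 0; 2; 4; 7; 9].
Definition Rn : seq nat := [:: 1; 3; 5; 8].
Definition Gn : seq nat := [:: 2; 4; 7; 9].
Definition Hn : seq (seq nat) :=
  [:: Rz; Gz; [:: 1; 4; 6; 8; 9]; [:: 9; 1; 2; 3; 4];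
      [:: 1; 2; 3; 4; 5]; [:: 2; 3; 4; 5; 6]; [:: 3; 4; 5; 6; 7];
      [:: 4; 5; 6; 7; 8]; [:: 5; 6; 7; 8; 9]].

Definition sameL (l1 l2 : seq nat) := all (fun m => (m \in l1) == (m \in l2)) (iota 0 10).

Definition mkn (s t : seq nat) (m : nat) : nat :=
  if m \in Rn then nth 0 s (index m Rn)
  else if m \in Gn then nth 0 t (index m Gn) else m.

Definition goodk (s t lk : seq nat) : bool :=
  has (fun E => all (fun y => mkn s t y \in E) lk) Hn.

Definition conds (le lf : seq nat) : bool :=
  [&& ~~ sameL le lf, ~~ sameL le Rz, ~~ sameL lf Rz, ~~ sameL le Gz & ~~ sameL lf Gz].

Definition Pairs := [seq p <- allpairs pair Hn Hn | conds p.1 p.2].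

Definition badk (s t : seq nat) := [seq lk <- Hn | ~~ goodk s t lk].

Definition inner (P : seq (seq nat * seq nat)) (G : seq (seq nat)) : bool :=
  all (fun p => ~~ all (fun lk => sameL lk p.1 || sameL lk p.2) G) P.

Definition check_with (P : seq (seq nat * seq nat)) : bool :=
  all (fun s => all (fun t => ((s == Rn) && (t == Gn)) || inner P (badk s t))
    (permutations Gn)) (permutations Rn).

Definition check := check_with Pairs.

Lemma checkT : check.
Proof. vm_compute. reflexivity. Qed.

Lemma check_use s t le lf : check -> s \in permutations Rn -> t \in permutations Gn ->
  le \in Hn -> lf \in Hn -> conds le lf ->
  (forall lk, lk \in Hn -> sameL lk le || sameL lk lf || goodk s t lk) ->
  (s == Rn) && (t == Gn).
Proof.
move=> C sP tP leH lfH cd A.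
have /orP[//|/allP B] := allP (allP C _ sP) _ tP.
have HP : (le, lf) \in Pairs.
  rewrite /Pairs mem_filter; apply/andP; split; first exact: cd.
  exact: (allpairs_f pair leH lfH).
have /negP [] := B _ HP.
apply/allP => lk; rewrite mem_filter => /andP[ng lkH].
by move: (A lk lkH); rewrite (negbTE ng) orbF.
Qed.

Ltac edge_tac := apply/setP=> x; rewrite !inE -!val_eqE /= !inordK // !orbA; done.

Lemma r_n : r_edge = setn Rz. Proof. edge_tac. Qed.
Lemma g_n : g_edge = setn Gz. Proof. edge_tac. Qed.
Lemma a_n : a_edge = setn [:: 1; 4; 6; 8; 9]. Proof. edge_tac. Qed.
Lemma b_n : b_edge = setn [:: 9; 1; 2; 3; 4]. Proof. edge_tac. Qed.
Lemma e1_n : e_edge 1 = setn [:: 1; 2; 3; 4; 5]. Proof. edge_tac. Qed.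
Lemma e2_n : e_edge 2 = setn [:: 2; 3; 4; 5; 6]. Proof. edge_tac. Qed.
Lemma e3_n : e_edge 3 = setn [:: 3; 4; 5; 6; 7]. Proof. edge_tac. Qed.
Lemma e4_n : e_edge 4 = setn [:: 4; 5; 6; 7; 8]. Proof. edge_tac. Qed.
Lemma e5_n : e_edge 5 = setn [:: 5; 6; 7; 8; 9]. Proof. edge_tac. Qed.

Lemma memH X : (X \in H) = has (fun l => X == setn l) Hn.
Proof.
rewrite /H r_n g_n a_n b_n e1_n e2_n e3_n e4_n e5_n !inE /= orbF.
by rewrite !orbA.
Qed.

Lemma val_inord m : m < 10 -> val (inord m : vtx) = m.
Proof. exact: inordK. Qed.

Lemma setn_same l1 l2 : setn l1 = setn l2 -> sameL l1 l2.
Proof.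
move=> E; apply/allP=> m; rewrite mem_iota => /andP[_ hm].
have := congr1 (fun S : {set vtx} => (inord m : vtx) \in S) E.
by rewrite /= !inE val_inord // => ->.
Qed.

Lemma same_setn l1 l2 : sameL l1 l2 -> setn l1 = setn l2.
Proof.
move=> /allP A; apply/setP=> x; rewrite !inE; apply/eqP; apply: A.
by rewrite mem_iota /= add0n ltn_ord.
Qed.

Lemma Hn_lt10 : all (all (fun m => m < 10)) Hn.
Proof. by []. Qed.

Lemma mkn_R s t m : m \in Rn -> mkn s t m = nth 0 s (index m Rn).
Proof. by rewrite /mkn => ->. Qed.

Lemma mkn_G s t m : m \in Gn -> mkn s t m = nth 0 t (index m Gn).
Proof.
rewrite /mkn => hG.
have -> : (m \in Rn) = false by move: hG; rewrite !inE; case/or4P => /eqP->.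
by rewrite hG.
Qed.

Lemma mkn_id m : mkn Rn Gn m = m.
Proof. by rewrite /mkn; case: ifP => h; [rewrite nth_index | case: ifP => h'; rewrite ?nth_index]. Qed.


Lemma rest06 : all (fun m => (m \notin Rn) ==> (m \notin Gn) ==> (m == 0) || (m == 6)) (iota 0 10).
Proof. by []. Qed.

Theorem lemma4p6 (e f : {set vtx}) (phi : vtx -> vtx) :
  e \in H -> f \in H -> e != f ->
  monomorphism e f phi ->
  r_edge \in H_ef e f -> g_edge \in H_ef e f ->
  phi @: r_edge = r_edge -> phi @: g_edge = g_edge ->
  forall y, y \in V_ef e f -> phi y = y.
Proof.
move=> eH fH nef [inj emap] rH gH er eg y yV.
have inV X x : X \in H_ef e f -> x \in X -> x \in V_ef e f.
  by move=> XH xX; apply/bigcupP; exists X.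
have vz : val z = 0 by exact: val_inord.
have phiz : phi z = z.
  apply: val_inj; rewrite vz.
  have h1 : phi z \in r_edge by rewrite -er; apply: imset_f; rewrite r_n inE vz.
  have h2 : phi z \in g_edge by rewrite -eg; apply: imset_f; rewrite g_n inE vz.
  move: h1 h2; rewrite r_n g_n !inE.
  by case: (phi z) => [[|[|[|[|[|[|[|[|[|[|k]]]]]]]]]] hk].
pose pn m := val (phi (inord m)).
have permp (l Xl : seq nat) (X : {set vtx}) :
    X = setn Xl -> phi @: X = X -> X \in H_ef e f -> uniq l ->
    all (fun m => m < 10) l -> 0 \notin l -> 0 \in Xl -> {subset l <= Xl} ->
    (forall m, m \in Xl -> m != 0 -> m \in l) ->
    map pn l \in permutations l.
  move=> EX eX XH ul l10 l0 X0 lX hXl.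
  have inX m : m \in l -> (inord m : vtx) \in X.
    move=> ml; rewrite EX inE val_inord; [exact: lX | exact: (allP l10)].
  have zX : z \in X by rewrite EX inE vz.
  have sub : {subset map pn l <= l}.
    move=> k /mapP[m ml ->]; apply: hXl.
      by have := imset_f phi (inX m ml); rewrite eX EX inE.
    apply/eqP=> h.
    have : (inord m : vtx) = z.
      apply: inj; [exact: inV _ _ XH (inX m ml) | exact: inV _ _ XH zX |].
      by apply: val_inj; rewrite phiz vz.
    move/(congr1 val); rewrite vz val_inord ?(allP l10) // => m0.
    by move: l0; rewrite -m0 ml.
  have um : uniq (map pn l).
    rewrite map_inj_in_uniq // => a b al bl eab.
    have : (inord a : vtx) = inord b.
      apply: inj; [exact: inV _ _ XH (inX a al) | exact: inV _ _ XH (inX b bl) |].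
      exact: val_inj.
    by move/(congr1 val); rewrite !val_inord ?(allP l10).
  rewrite mem_permutations; apply: uniq_perm => //.
  by case: (uniq_min_size um sub (eq_leq (esym (size_map _ _)))).

have pR : map pn Rn \in permutations Rn.
  apply: (permp Rn Rz r_edge r_n er rH) => //; first by apply/allP.
  by move=> m; rewrite !inE => /orP[/eqP->//|h _].
have pG : map pn Gn \in permutations Gn.
  apply: (permp Gn Gz g_edge g_n eg gH) => //; first by apply/allP.
  by move=> m; rewrite !inE => /orP[/eqP->//|h _].
have phi6 : v 6 \in V_ef e f -> phi (v 6) = v 6.
  move=> v6V; have v6v : val (v 6) = 6 by exact: val_inord.
  have nr : phi (v 6) \notin r_edge.
    apply/negP; rewrite -er => /imsetP[x xr e6].
    have ex := inj _ _ v6V (inV _ _ rH xr) e6.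
    by move: xr; rewrite -ex r_n inE v6v.
  have ng : phi (v 6) \notin g_edge.
    apply/negP; rewrite -eg => /imsetP[x xr e6].
    have ex := inj _ _ v6V (inV _ _ gH xr) e6.
    by move: xr; rewrite -ex g_n inE v6v.
  apply: val_inj; rewrite v6v; move: nr ng; rewrite r_n g_n !inE.
  by case: (phi (v 6)) => [[|[|[|[|[|[|[|[|[|[|k]]]]]]]]]] hk].
have hD x : x \in V_ef e f -> val (phi x) = mkn (map pn Rn) (map pn Gn) (val x).
  move=> xV; case: (boolP (val x \in Rn)) => xR.
    by rewrite mkn_R // (nth_map 0) ?index_mem // nth_index // /pn inord_val.
  case: (boolP (val x \in Gn)) => xG.
    by rewrite mkn_G // (nth_map 0) ?index_mem // nth_index // /pn inord_val.
  have := allP rest06 (val x); rewrite mem_iota /= add0n ltn_ord xR xG => /(_ isT).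
  case/orP => /eqP h.
    have -> : x = z by apply: val_inj; rewrite vz; exact: h.
    by rewrite phiz vz.
  have ex : x = v 6 by apply: val_inj; rewrite val_inord //; exact: h.
  by rewrite ex phi6 -?ex // h.
move: eH; rewrite memH => /hasP[le leH /eqP Ee].
move: fH; rewrite memH => /hasP[lf lfH /eqP Ef].
have nsame (l1 l2 : seq nat) (X Y : {set vtx}) : X = setn l1 -> Y = setn l2 -> X != Y -> ~~ sameL l1 l2.
  by move=> -> -> nXY; apply/negP => /same_setn E; rewrite E eqxx in nXY.
have rf : r_edge != f by move: rH; rewrite /H_ef !in_setD1 => /andP[].
have re : r_edge != e by move: rH; rewrite /H_ef !in_setD1 => /and3P[].
have gf : g_edge != f by move: gH; rewrite /H_ef !in_setD1 => /andP[].
have ge : g_edge != e by move: gH; rewrite /H_ef !in_setD1 => /and3P[].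
have cd : conds le lf.
  apply/and5P; split.
  - exact: (nsame _ _ _ _ Ee Ef nef).
  - by apply: (nsame _ _ _ _ Ee r_n); rewrite eq_sym.
  - by apply: (nsame _ _ _ _ Ef r_n); rewrite eq_sym.
  - by apply: (nsame _ _ _ _ Ee g_n); rewrite eq_sym.
  - by apply: (nsame _ _ _ _ Ef g_n); rewrite eq_sym.
have Hall : forall lk, lk \in Hn -> sameL lk le || sameL lk lf || goodk (map pn Rn) (map pn Gn) lk.
  move=> lk lkH; apply/orP.
  case: (boolP (sameL lk le)) => [h|nke]; first by left; apply/orP; left.
  case: (boolP (sameL lk lf)) => [h|nkf]; first by left; apply/orP; right.
  right.
  have kH : setn lk \in H_ef e f.
    rewrite /H_ef !in_setD1 memH; apply/and3P; split.
    - by apply/negP => /eqP; rewrite Ef => /setn_same; rewrite (negbTE nkf).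
    - by apply/negP => /eqP; rewrite Ee => /setn_same; rewrite (negbTE nke).
    - by apply/hasP; exists lk.
  have := emap _ kH; rewrite memH => /hasP[E EH /eqP EE].
  apply/hasP; exists E => //; apply/allP => m mk.
  have m10 : m < 10 := allP (allP Hn_lt10 _ lkH) _ mk.
  have mX : (inord m : vtx) \in setn lk by rewrite inE val_inord.
  have := hD _ (inV _ _ kH mX); rewrite val_inord // ; move=> <-.
  by have := imset_f phi mX; rewrite EE inE.
have /andP[/eqP sR /eqP sG] := check_use _ _ _ _ checkT pR pG leH lfH cd Hall.
by apply: val_inj; rewrite hD // sR sG mkn_id.
Qed.
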